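(* The sequence $\{k^2+k+1\}_{k=0}^{\infty}$ is a Legendre multiplier sequence.
   Context: The Legendre polynomials $\mathfrak{Le}_n(x)$ are defined by $\frac{1}{\sqrt{1-2xt+t^2}}=\sum_{k=0}^{\infty}\mathfrak{Le}_k(x)t^k$. A real sequence $\{\gamma_k\}_{k=0}^{\infty}$ is a Legendre multiplier sequence if, for every $n$ and all real $a_0,\dots,a_n$, the polynomial $\sum_{k=0}^n a_k\gamma_k\mathfrak{Le}_k(x)$ has only real zeros whenever $\sum_{k=0}^n a_k\mathfrak{Le}_k(x)$ has only real zeros. *)

(* Defs.v *)
From HB Require Import structures.
From mathcomp Require Import all_boot all_order all_algebra.
From mathcomp Require Import reals.
From mathcomp Require Import complex.

Set Implicit Arguments.
Unset Strict Implicit.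
Unset Printing Implicit Defensive.

Import Order.TTheory GRing.Theory Num.Theory.
Local Open Scope ring_scope.

(* Legendre polynomial Le_n, defined as the coefficient of t^n in the expansion of
   1/sqrt(1 - 2xt + t^2) = (1 - u)^(-1/2) with u = 2xt - t^2:
     (1-u)^(-1/2) = sum_m C(2m,m)/4^m u^m,
     [t^n] (2xt - t^2)^m = [t^(n-m)] (2x - t)^m = C(m, n-m) (-1)^(n-m) (2x)^(2m-n).
   Terms with 2m < n vanish since then C(m, n-m) = 0. *)
Definition legendre (R : realType) (n : nat) : {poly R} :=
  \sum_(m < n.+1)
    ((('C(2 * m, m))%:R / (4 ^ m)%:R) * ('C(m, n - m))%:R * (-1) ^+ (n - m))
      *: (2%:R *: 'X) ^+ (2 * m - n).

Definition only_real_zeros (R : realType) (p : {poly R}) : Prop :=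
  forall z : R[i], root (map_poly (real_complex R) p) z -> complex.Im z = 0.

Definition legendre_multiplier_sequence (R : realType) (gamma : nat -> R) : Prop :=
  forall (n : nat) (a : nat -> R),
    only_real_zeros (\sum_(k < n.+1) a k *: legendre R k) ->
    only_real_zeros (\sum_(k < n.+1) (a k * gamma k) *: legendre R k).

(* Main.v *)
Require Import Defs.
From HB Require Import structures.
From mathcomp Require Import all_boot all_order all_algebra.
From mathcomp Require Import reals.
From mathcomp Require Import complex.
From mathcomp Require Import ring lra zify.
Import Order.TTheory GRing.Theory Num.Theory.
Local Open Scope ring_scope.

Definition Lop (F : comNzRingType) (p : {poly F}) : {poly F} :=
  ('X ^+ 2 - 1) * p^`()^`() + 'X *+ 2 * p^`().

Arguments Lop {F} p.
Lemma LopD (F : comNzRingType) (p q : {poly F}) : Lop (p + q) = Lop p + Lop q.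
Proof. by rewrite /Lop !derivD !mulrDr addrACA. Qed.
Lemma Lop0 (F : comNzRingType) : Lop (0 : {poly F}) = 0.
Proof. by rewrite /Lop !deriv0 !mulr0 addr0. Qed.
Lemma LopZ (F : comNzRingType) (c : F) (p : {poly F}) : Lop (c *: p) = c *: Lop p.
Proof. by rewrite /Lop !derivZ scalerDr -!scalerAr. Qed.
Lemma Lop_sum (F : comNzRingType) n (G : 'I_n -> {poly F}) :
  Lop (\sum_(i < n) G i) = \sum_(i < n) Lop (G i).
Proof. exact: (big_morph _ (@LopD F) (@Lop0 F)). Qed.
Lemma LopXn (F : comNzRingType) (j : nat) :
  Lop ('X^j : {poly F}) = (j * j.+1)%:R *: 'X^j - (j * j.-1)%:R *: 'X^(j.-2).
Proof.
rewrite /Lop derivXn derivMn derivXn.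
case: j => [|[|j]].
- by rewrite !mulr0n !mulr0 addr0 !scale0r subrr.
- change (1.-1)%N with 0%N; change (1.-2)%N with 0%N.
  rewrite mulr0n mul0rn mulr0 add0r mulr1n expr0 mulr1 expr1 muln0 scale0r subr0 mul1n scaler_nat.
  by [].
- have e1 : j.+2.-2 = j by [].
  have e2 : j.+2.-1 = j.+1 by [].
  rewrite e1 e2 !scaler_nat !exprS.
  ring.
Qed.

Section Leg.
Variable R : realType.

Definition lc (n m : nat) : R :=
  ('C(2 * m, m)%:R / (4 ^ m)%:R) * 'C(m, n - m)%:R * (-1) ^+ (n - m).

Lemma leg_expand n : legendre R n =
  \sum_(m < n.+1) (lc n m * 2%:R ^+ (2 * m - n)) *: 'X^(2 * m - n).
Proof. apply: eq_bigr => m _; rewrite exprZn scalerA. reflexivity. Qed.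

Lemma I1 m : ('C((2 * m).+2, m.+1) * m.+1 = 'C(2 * m, m) * (2 * m).+1 * 2)%N.
Proof.
have h1 := mul_bin_diag (2 * m).+2 m.
have h2 := mul_bin_diag (2 * m).+1 m.
have h3 : 'C((2 * m).+1, m.+1) = 'C((2 * m).+1, m).
  rewrite -bin_sub; last by lia.
  congr 'C(_, _); lia.
simpl in h1, h2. rewrite h3 in h2.
rewrite mulnC -h1 (_ : ('C(2 * m, m) * (2 * m).+1 = m.+1 * 'C((2 * m).+1, m))%N); last by rewrite mulnC h2.
ring.
Qed.

Lemma I2 m e : (e < m)%N -> ('C(m.+1, e) * ((m.+1 - e) * (m - e)) = 'C(m, e.+1) * m.+1 * e.+1)%N.
Proof.
move=> hem.
have h1 := mul_bin_down m.+1 e.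
have h2 := mul_bin_left m e.
simpl in h1.
rewrite mulnA [(_ * (m.+1 - e))%N]mulnC -h1 -mulnA [('C(m, e) * (m - e))%N]mulnC -h2.
ring.
Qed.

Definition jj n m := (2 * m - n)%N.
Definition AA n m : {poly R} :=
  (lc n m * 2%:R ^+ jj n m * (((jj n m * (jj n m).+1)%N)%:R - ((n * n.+1)%N)%:R))
     *: 'X^(jj n m).
Definition BB n m : {poly R} :=
  (lc n m * 2%:R ^+ jj n m * ((jj n m * (jj n m).-1)%N)%:R) *: 'X^((jj n m).-2).

Lemma AB_shift n m : (m < n)%N -> AA n m = BB n m.+1.
Proof.
move=> hmn; rewrite /AA /BB /jj.
case: (leqP n (2 * m)) => h.
- set k := (2 * m - n)%N; set e := (n - m.+1)%N.
  have E1 : (2 * m.+1 - n)%N = k.+2 by rewrite /k; lia.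
  have E5 : (k.+2).-2 = k by [].
  have E6 : (k.+2).-1 = k.+1 by [].
  rewrite E1 E5 E6; congr (_ *: _).
  rewrite /lc.
  have E2 : (n - m)%N = e.+1 by rewrite /e; lia.
  have E3 : (2 * m.+1)%N = (2 * m).+2 by lia.
  have E4 : (n - m.+1)%N = e by [].
  rewrite E2 E3 E4.
  have hB := I1 m.
  have hem : (e < m)%N by rewrite /e; lia.
  have hD := I2 m e hem.
  have Ea : (m.+1 - e)%N = k.+2 by rewrite /e /k; lia.
  have Eb : (m - e)%N = k.+1 by rewrite /e /k; lia.
  rewrite Ea Eb in hD.
  have En : n = (k + 2 * e + 2)%N by rewrite /e /k; lia.
  have Em : m = (k + e + 1)%N by rewrite /e /k; lia.
  move: hB hD; set B0 := 'C(2 * m, m); set B2 := 'C((2 * m).+2, m.+1);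
    set D1 := 'C(m, e.+1); set D2 := 'C(m.+1, e).
  move=> /(congr1 (fun x : nat => x%:R : R)) hB /(congr1 (fun x : nat => x%:R : R)) hD.
  rewrite !natrM in hB hD.
  have m1 : (m.+1%:R : R) != 0 by rewrite pnatr_eq0.
  have k12 : (k.+2%:R * k.+1%:R : R) != 0 by rewrite mulf_neq0 // pnatr_eq0.
  have eB2 : (B2%:R : R) = B0%:R * (2 * m).+1%:R * 2 / m.+1%:R.
    by rewrite -hB mulfK.
  have eD2 : (D2%:R : R) = D1%:R * m.+1%:R * e.+1%:R / (k.+2%:R * k.+1%:R).
    by rewrite -hD mulfK.
  rewrite eB2 eD2 !natrX !exprS.
  have F0 : (4%:R ^+ m : R) != 0 by rewrite expf_neq0 // pnatr_eq0.
  move: F0; set F := (4%:R ^+ m : R); set t := (2 ^+ k : R); set s := ((-1) ^+ e : R).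
  move=> F0.
  clearbody F t s B0 B2 D1 D2 k e.
  subst m n.
  rewrite !natrM.
  field.
  have hk := ler0n R k; have he := ler0n R e.
  by repeat (apply/andP; split) => //; apply: lt0r_neq0; lra.
- have hc : lc n m = 0.
    by rewrite /lc (@bin_small m (n - m)) ?mulr0n ?mulr0 ?mul0r //; lia.
  have hj1 : (2 * m.+1 - n <= 1)%N by lia.
  have hj : ((2 * m.+1 - n) * (2 * m.+1 - n).-1 = 0)%N.
    by move: hj1; case: (2 * m.+1 - n)%N => [|[|j]].
  by rewrite hc hj !mul0r mulr0n mulr0 !scale0r.
Qed.

Lemma sumAB n : \sum_(m < n.+1) AA n m = \sum_(m < n.+1) BB n m.
Proof.
rewrite big_ord_recr big_ord_recl /=.
have A0 : AA n n = 0.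
  rewrite /AA /jj (_ : (2 * n - n)%N = n); last by lia.
  by rewrite subrr mulr0 scale0r.
have B0 : BB n 0 = 0.
  rewrite /BB /jj (_ : (2 * 0 - n)%N = 0%N); last by lia.
  by rewrite mul0n mulr0n mulr0 scale0r.
rewrite A0 B0 addr0 add0r.
apply: eq_bigr => i _.
exact: AB_shift (ltn_ord i).
Qed.

Lemma Lop_leg n : Lop (legendre R n) = ((n * n.+1)%N)%:R *: legendre R n.
Proof.
rewrite leg_expand Lop_sum scaler_sumr.
have E : forall m : 'I_n.+1, Lop ((lc n m * 2%:R ^+ (2 * m - n)) *: 'X^(2 * m - n))
   = ((n * n.+1)%N)%:R *: ((lc n m * 2%:R ^+ (2 * m - n)) *: 'X^(2 * m - n))
     + AA n m - BB n m.
  move=> m; rewrite LopZ LopXn /AA /BB /jj.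
  rewrite scalerBr !scalerA -scalerDl.
  congr (_ *: _ - _); ring.
rewrite (eq_bigr _ (fun m _ => E m)) sumrB big_split /= sumAB.
by rewrite addrK.
Qed.

End Leg.

Section S.
Variable R : realType.
Local Notation Imc := (@complex.Im R).
Local Notation Rec := (@complex.Re R).

Lemma step_ineq (A B z u : R[i]) : 0 < Imc z -> Imc u <= 0 ->
  Imc (B * conjc A) <= 0 ->
  Imc ((A + (z - u) * B) * conjc ((z - u) * A)) <= 0.
Proof.
case: A => a1 a2; case: B => b1 b2; case: z => z1 z2; case: u => u1 u2.
simpc => /= hz hu hB.
have hF : 0 <= z2 - u2 by lra.
have e : (a1 * b2 - b1 * a2 <= 0) by move: hB; congr (_ <= _); ring.
have h1 : 0 <= (a1^+2 + a2^+2) * (z2 - u2).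
  by apply: mulr_ge0 => //; apply: addr_ge0; apply: sqr_ge0.
have h2 : ((z1 - u1)^+2 + (z2 - u2)^+2) * (a1 * b2 - b1 * a2) <= 0.
  by apply: mulr_ge0_le0 => //; apply: addr_ge0; apply: sqr_ge0.
set L := (X in X <= 0).
have -> : L = - ((a1^+2 + a2^+2) * (z2 - u2)) + ((z1 - u1)^+2 + (z2 - u2)^+2) * (a1 * b2 - b1 * a2) by rewrite /L; ring.
lra.
Qed.

Lemma prodL (z : R[i]) (s : seq R[i]) : 0 < Imc z ->
  (forall u, u \in s -> Imc u <= 0) ->
  Imc ((\prod_(u <- s) ('X - u%:P))^`().[z] * conjc ((\prod_(u <- s) ('X - u%:P)).[z])) <= 0.
Proof.
move=> hz; elim: s => [|u s IH] hs.
  by rewrite big_nil derivC horner0 mul0r.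
rewrite big_cons derivM derivB derivX derivC subr0 mul1r !hornerE.
have -> : (\prod_(j <- s) ('X - j%:P)).[z] + (z - u) * (\prod_(j <- s) ('X - j%:P))^`().[z]
  = (\prod_(j <- s) ('X - j%:P)).[z] + (z - u) * (\prod_(j <- s) ('X - j%:P))^`().[z] by [].
apply: step_ineq => //; first by apply: hs; rewrite in_cons eqxx.
by apply: IH => v hv; apply: hs; rewrite in_cons hv orbT.
Qed.

Lemma scale_ineq (c A B : R[i]) : Imc (B * conjc A) <= 0 ->
  Imc (c * B * conjc (c * A)) <= 0.
Proof.
case: A => a1 a2; case: B => b1 b2; case: c => c1 c2.
simpc => /= hB.
set L := (X in X <= 0).
have -> : L = (c1^+2 + c2^+2) * (- (b1 * a2) + b2 * a1) by rewrite /L; ring.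
by apply: mulr_ge0_le0 => //; apply: addr_ge0; apply: sqr_ge0.
Qed.

Lemma polyL (f : {poly R[i]}) (z : R[i]) : 0 < Imc z ->
  (forall u, root f u -> Imc u <= 0) ->
  Imc (f^`().[z] * conjc f.[z]) <= 0.
Proof.
move=> hz hr.
have [->|f0] := eqVneq f 0; first by rewrite deriv0 horner0 mul0r.
have [r er] := closed_field_poly_normal f.
have lc0 : lead_coef f != 0 by rewrite lead_coef_eq0.
rewrite er derivZ !hornerZ; apply: scale_ineq; apply: prodL => // u hu.
apply: hr; rewrite er rootZ // root_prod_XsubC //.
Qed.

Lemma key (A B c : R[i]) : 0 < Imc c -> A != 0 -> Imc (B * conjc A) <= 0 ->
  A + c * B != 0.
Proof.
case: A => a1 a2; case: B => b1 b2; case: c => c1 c2 /= hc.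
move=> hA hB; apply/negP => /eqP E.
move: hB E; simpc => /= hB [e1 e2].
have ea1 : a1 = c2 * b2 - c1 * b1 by lra.
have ea2 : a2 = - (c1 * b2 + c2 * b1) by lra.
have E3 : - (b1 * a2) + b2 * a1 = c2 * (b1^+2 + b2^+2) by rewrite ea1 ea2; ring.
rewrite E3 pmulr_rle0 // in hB.
have hb1 : b1 ^+ 2 = 0 by have := sqr_ge0 b1; have := sqr_ge0 b2; lra.
have hb2 : b2 ^+ 2 = 0 by have := sqr_ge0 b1; have := sqr_ge0 b2; lra.
move/eqP: hb1; rewrite sqrf_eq0 => /eqP hb1.
move/eqP: hb2; rewrite sqrf_eq0 => /eqP hb2.
move/negP: hA; apply; apply/eqP.
rewrite ea1 ea2 hb1 hb2 !mulr0 subrr ?addr0; apply/eqP; by rewrite eq_complex /= ?oppr0 ?eqxx. Qed.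


Lemma Im_sub1 (z : R[i]) : Imc (z - 1) = Imc z.
Proof. by case: z => a b; simpc. Qed.
Lemma Im_add1 (z : R[i]) : Imc (z + 1) = Imc z.
Proof. by case: z => a b; simpc. Qed.

Definition Top' (p : {poly R[i]}) : {poly R[i]} :=
  p + ('X ^+ 2 - 1) * p^`()^`() + 'X *+ 2 * p^`().

Lemma Top_UHP (P : {poly R[i]}) (z : R[i]) : 0 < Imc z ->
  (forall u, root P u -> Imc u = 0) -> (Top' P).[z] != 0.
Proof.
move=> hz hP.
have hP' : forall u, root P u -> Imc u <= 0 by move=> u /hP ->.
set h := P + (z - 1)%:P * P^`().
have hroots : forall u, root h u -> Imc u <= 0.
  move=> u hu; rewrite leNgt; apply/negP => hu0.
  have Pu : P.[u] != 0.
    by apply/negP => Pu0; have := hP u Pu0; move: hu0; rewrite lt_def => /andP [/eqP ? _].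
  have := key (P.[u]) (P^`().[u]) (z-1) _ Pu (polyL P u hu0 hP').
  rewrite Im_sub1 => /(_ hz); move: hu; rewrite /root /h !hornerE => /eqP ->.
  by rewrite eqxx.
have hz0 : h.[z] != 0.
  apply/negP => hz0; have := hroots z hz0; rewrite leNgt hz //.
have := key (h.[z]) (h^`().[z]) (z+1) _ hz0 (polyL h z hz hroots).
rewrite Im_add1 => /(_ hz).
have -> : (Top' P).[z] = h.[z] + (z + 1) * h^`().[z].
  rewrite /Top' /h derivD derivM derivC mul0r add0r !hornerE.
  ring.
by [].
Qed.

Lemma ImJ (x : R[i]) : Imc (conjc x) = - Imc x. Proof. by case: x. Qed.

Lemma map_Lop (P : {poly R}) :
  map_poly (real_complex R) (Lop P) = Lop (map_poly (real_complex R) P).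
Proof.
rewrite /Lop rmorphD !rmorphM /= !deriv_map.
rewrite raddfB raddfMn /= map_polyXn map_polyX rmorph1.
reflexivity.
Qed.

Lemma map_conj_real (Q : {poly R}) :
  map_poly conjc (map_poly (real_complex R) Q) = map_poly (real_complex R) Q.
Proof.
rewrite -map_poly_comp; apply: eq_map_poly => x /=; exact: conjc_real.
Qed.

Lemma main_real (q : {poly R}) : only_real_zeros q -> only_real_zeros (q + Lop q).
Proof.
move=> hq z hz.
set P := map_poly (real_complex R) q.
have hmap : map_poly (real_complex R) (q + Lop q) = Top' P.
  rewrite raddfD /= map_Lop. by rewrite /Top' /Lop addrA.
rewrite hmap in hz.
have hP : forall u, root P u -> Imc u = 0 := hq.
have [hneg|hpos|//] := ltgtP (Imc z) 0.
- have hz' : root (Top' P) (conjc z).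
    rewrite -complex_root_conj -hmap map_conj_real hmap; exact: hz.
  have := Top_UHP P (conjc z).
  rewrite ImJ oppr_gt0 => /(_ hneg hP).
  by rewrite -rootE hz'.
- have := Top_UHP P z hpos hP.
  by rewrite -rootE hz.
Qed.

End S.

Theorem lemma4p7 (R : realType) :
  legendre_multiplier_sequence (fun k : nat => ((k ^ 2 + k + 1)%N)%:R : R).
Proof.
move=> n a hq.
have Eq : \sum_(k < n.+1) (a k * ((k ^ 2 + k + 1)%N)%:R) *: legendre R k
  = (\sum_(k < n.+1) a k *: legendre R k) + Lop (\sum_(k < n.+1) a k *: legendre R k).
  rewrite Lop_sum -big_split; apply: eq_bigr => k _ /=.
  rewrite LopZ Lop_leg scalerA -scalerDl.
  have -> : ((k ^ 2 + k + 1)%N = (k * k.+1)%N + 1)%N by ring.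
  congr (_ *: _); rewrite natrD; ring.
rewrite Eq; exact: main_real.
Qed.
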